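(* For each sample size $n$, let $\hat\theta_u,\hat\theta_b$ be real-valued estimators and let $\hat\sigma^2_u,\hat\sigma^2_b,\hat\sigma_{bu}$ be real-valued estimators (all depending on $n$). Suppose that, as $n\to\infty$, $\hat\theta_b \to \theta_0+\mu$ in probability, $\hat\theta_u\to\theta_0$ in probability, and $n\hat\sigma^2_u\to\nu_u$, $n\hat\sigma^2_b\to\nu_b$, $n\hat\sigma_{bu}\to\nu_{bu}$ in probability, where $\theta_0,\mu,\nu_u,\nu_b,\nu_{bu}$ are finite constants. Define $$\hat\lambda=\frac{\hat\sigma^2_u-\hat\sigma_{bu}}{(\hat\theta_u-\hat\theta_b)^2+\hat\sigma^2_u+\hat\sigma^2_b-2\hat\sigma_{bu}},\qquad \hat\theta_{\hat\lambda}=\hat\lambda\hat\theta_b+(1-\hat\lambda)\hat\theta_u .$$ Then, if $\mu\neq 0$, we have $\hat\lambda\to 0$ in probability and $\hat\theta_{\hat\lambda}\to\theta_0$ in probability.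
   Context: $\theta_0\in\mathbb{R}$ is the target (causal) parameter; $\hat\theta_u$ is thought of as an (asymptotically) unbiased estimator, $\hat\theta_b$ as a possibly biased estimator with asymptotic bias $\mu$, and $\hat\sigma^2_u,\hat\sigma^2_b,\hat\sigma_{bu}$ as estimates of $\mathrm{Var}(\hat\theta_u)$, $\mathrm{Var}(\hat\theta_b)$ and $\mathrm{Cov}(\hat\theta_b,\hat\theta_u)$. $\hat\theta_{\hat\lambda}$ is called the combination estimator. *)

(* Defs.v *)
From HB Require Import structures.
From mathcomp Require Import all_boot all_order all_algebra.
From mathcomp Require Import all_classical all_reals all_analysis.
Set Implicit Arguments. Unset Strict Implicit. Unset Printing Implicit Defensive.
Import Order.TTheory GRing.Theory Num.Theory.
Import numFieldNormedType.Exports.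
Local Open Scope classical_set_scope.
Local Open Scope ring_scope.

Definition cvg_in_prob d (T : measurableType d) (R : realType)
  (P : probability T R) (X : nat -> T -> R) (c : R) : Prop :=
  forall eps : R, 0 < eps ->
    (fun n => P [set w | eps <= `|X n w - c|]) @ \oo --> 0%E.

Definition lambda_hat (R : realType) (tu tb s2u s2b sbu : R) : R :=
  (s2u - sbu) / ((tu - tb) ^+ 2 + s2u + s2b - 2 * sbu).

Definition comb_est (R : realType) (tu tb s2u s2b sbu : R) : R :=
  let l := lambda_hat tu tb s2u s2b sbu in l * tb + (1 - l) * tu.

(* Main.v *)
Require Import Defs.
From HB Require Import structures.
From mathcomp Require Import all_boot all_order all_algebra.
From mathcomp Require Import all_classical all_reals all_analysis.
From mathcomp Require Import measurable_realfun ring lra.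
Import Order.TTheory GRing.Theory Num.Theory.
Import numFieldNormedType.Exports.
Local Open Scope classical_set_scope.
Local Open Scope ring_scope.
Lemma det (R : realType) (theta0 mu nu_u nu_b nu_bu eps : R) :
  mu != 0 -> 0 < eps -> exists2 delta : R, 0 < delta &
  exists N : nat, forall n : nat, (N <= n)%N -> forall a b su sb sbu : R,
   `|b - (theta0 + mu)| < delta -> `|a - theta0| < delta ->
   `|n%:R * su - nu_u| < 1 -> `|n%:R * sb - nu_b| < 1 -> `|n%:R * sbu - nu_bu| < 1 ->
   `|lambda_hat a b su sb sbu - 0| < eps /\ `|comb_est a b su sb sbu - theta0| < eps.
Proof.
move=> mu0 eps0.
set m := `|mu|.
have m0 : 0 < m by rewrite normr_gt0.
set K := `|nu_u| + `|nu_b| + 2 * `|nu_bu| + 4.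
have K0 : 0 < K by rewrite /K; have := normr_ge0 nu_u; have := normr_ge0 nu_b; have := normr_ge0 nu_bu; lra.
set e1 := eps / (4 * m + 1).
have e10 : 0 < e1 by rewrite /e1 divr_gt0 //; lra.
have e1eps : e1 * (4 * m + 1) = eps by rewrite /e1 mulfVK //; lra.
set C := K * (1 + e1) * 4 / (e1 * m ^+ 2).
have C0 : 0 <= C.
  rewrite /C; apply/ltW/divr_gt0; last by apply: mulr_gt0 => //; exact: exprn_gt0.
  apply: mulr_gt0; [apply: mulr_gt0|]; lra.
have CK : C * (e1 * m ^+ 2) = K * (1 + e1) * 4 by rewrite /C mulfVK // gt_eqF // mulr_gt0 // exprn_gt0.
exists (Num.min (m / 4) (eps / 2)).
  by rewrite lt_min; apply/andP; split; lra.
exists (Num.Def.archi_bound C) => n hn a b su sb sbu hb ha hsu hsb hsbu.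
set x : R := n%:R.
have xC : C < x.
  apply: (lt_le_trans (archi_boundP C0)); rewrite /x ler_nat //.
have x0 : 0 < x by lra.
have hd1 : Num.min (m / 4) (eps / 2) <= m / 4 by rewrite ge_min lexx.
have hd2 : Num.min (m / 4) (eps / 2) <= eps / 2 by rewrite ge_min lexx orbT.
move: (Num.min _ _) hd1 hd2 hb ha => dl hd1 hd2 hb ha.
set p := x * su. set q := x * sb. set r := x * sbu.
have hsu' : `|p - nu_u| < 1 := hsu. have hsb' : `|q - nu_b| < 1 := hsb. have hsbu' : `|r - nu_bu| < 1 := hsbu.
rewrite ltr_norml in hsu'; rewrite ltr_norml in hsb'; rewrite ltr_norml in hsbu'.
move: hsu' hsb' hsbu' => /andP[p1 p2] /andP[q1 q2] /andP[r1 r2].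
have nu1 := ler_norml nu_u `|nu_u|; rewrite lexx in nu1; move/esym/andP: nu1 => [nu1 nu1'].
have nu2 := ler_norml nu_b `|nu_b|; rewrite lexx in nu2; move/esym/andP: nu2 => [nu2 nu2'].
have nu3 := ler_norml nu_bu `|nu_bu|; rewrite lexx in nu3; move/esym/andP: nu3 => [nu3 nu3'].
have g1 := normr_ge0 nu_u; have g2 := normr_ge0 nu_b; have g3 := normr_ge0 nu_bu.
have hpr : `|p - r| <= K.
  rewrite ler_norml /K; apply/andP; split; lra.
have hpqr : - K <= p + q - 2 * r by rewrite /K; lra.
have hy : m / 2 <= `|b - a|.
  have : m <= `|b - a| + `|(b - (theta0 + mu)) - (a - theta0)|.
    rewrite /m -[X in `|X| <= _](_ : (b - a) - ((b - (theta0 + mu)) - (a - theta0)) = mu); last by ring.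
    exact: ler_normB.
  have := ler_normB (b - (theta0 + mu)) (a - theta0); lra.
have hy2 : m ^+ 2 / 4 <= (a - b) ^+ 2.
  rewrite -(@real_normK _ (a - b)) ?num_real // distrC.
  have := normr_ge0 (b - a); nra.
set D := x * (a - b) ^+ 2 + p + q - 2 * r.
have hD : K < e1 * D.
  have : x * (e1 * m ^+ 2) > K * (1 + e1) * 4.
    have hm : 0 < e1 * m ^+ 2 by apply: mulr_gt0 => //; apply: exprn_gt0.
    by rewrite -CK ltr_pM2r.
  have : x * (e1 * m ^+ 2) / 4 <= e1 * (x * (a - b) ^+ 2).
    have : 0 < x * e1 by apply: mulr_gt0.
    nra.
  rewrite /D; nra.
have D0 : 0 < D by nra.
have xn0 : x != 0 by rewrite gt_eqF.
have Dn0 : D != 0 by rewrite gt_eqF.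
have denE : (a - b) ^+ 2 + su + sb - 2 * sbu = D / x.
  by rewrite /D /p /q /r; field.
have lamE : lambda_hat a b su sb sbu = (p - r) / D.
  rewrite /lambda_hat denE /p /r; move: Dn0; clearbody D => Dn0; field.
  by rewrite Dn0 xn0.
have hlam : `|lambda_hat a b su sb sbu| < e1.
  rewrite lamE normrM normfV (gtr0_norm D0) ltr_pdivrMr //; lra.
split; first by rewrite subr0; apply: (lt_trans hlam); rewrite -e1eps; nra.
have -> : comb_est a b su sb sbu - theta0 = lambda_hat a b su sb sbu * (b - a) + (a - theta0).
  by rewrite /comb_est /=; ring.
apply: (le_lt_trans (ler_normD _ _)); rewrite normrM.
have hba : `|b - a| <= 3 / 2 * m.
  have : `|b - a| <= `|b - (theta0 + mu)| + `|mu| + `|a - theta0|.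
    rewrite -[X in `|X| <= _](_ : (b - (theta0 + mu)) + mu - (a - theta0) = b - a); last by ring.
    have := ler_normB (b - (theta0 + mu) + mu) (a - theta0); have := ler_normD (b - (theta0 + mu)) mu; lra.
  rewrite -/m; lra.
have : `|lambda_hat a b su sb sbu| * `|b - a| <= e1 * (3 / 2 * m).
  apply: ler_pM => //; lra.
have := normr_ge0 (lambda_hat a b su sb sbu).
rewrite -e1eps in hd2 *; nra.
Qed.

Lemma inv_meas (R : realType) : measurable_fun setT (fun x : R => x^-1).
Proof.
have -> : (fun x : R => x^-1) = (fun x => if x == 0 then 0 else x^-1).
  by apply: funext => x; case: eqP => // ->; rewrite invr0.
have mf : measurable_fun setT (fun x : R => x == 0).
  exact: (@measurable_fun_eqr _ R R setT (fun x => x) (fun _ => 0) (@measurable_id _ _ setT) (measurable_cst _)).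
apply: measurable_fun_if => //.
apply: subspace_continuous_measurable_fun.
  exact: mf.
apply: continuous_in_subspaceT => x; rewrite inE /= => -[_ /negbT hx].
exact: inv_continuous.
Qed.

Lemma lam_meas d (T : measurableType d) (R : realType) (tu tb s2u s2b sbu : T -> R) :
  measurable_fun setT tu -> measurable_fun setT tb -> measurable_fun setT s2u ->
  measurable_fun setT s2b -> measurable_fun setT sbu ->
  measurable_fun setT (fun w => lambda_hat (tu w) (tb w) (s2u w) (s2b w) (sbu w)) /\
  measurable_fun setT (fun w => comb_est (tu w) (tb w) (s2u w) (s2b w) (sbu w)).
Proof.
move=> m1 m2 m3 m4 m5.
have ml : measurable_fun setT (fun w => lambda_hat (tu w) (tb w) (s2u w) (s2b w) (sbu w)).
  rewrite /lambda_hat; apply: measurable_funM; first exact: measurable_funB.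
  apply: (measurableT_comp (inv_meas R)).
  apply: measurable_funB; last by apply: measurable_funM => //; exact: measurable_cst.
  apply: measurable_funD => //; apply: measurable_funD => //.
  by apply: measurable_funX; apply: measurable_funB.
split => //; rewrite /comb_est /=.
apply: measurable_funD; apply: measurable_funM => //.
by apply: measurable_funB => //; exact: measurable_cst.
Qed.

Lemma set_meas d (T : measurableType d) (R : realType) (X : T -> R) (c eps : R) :
  measurable_fun setT X -> measurable [set w | eps <= `|X w - c|].
Proof.
move=> mX.
have mf : measurable_fun setT (fun w => eps <= `|X w - c|).
  apply: measurable_fun_ler; first exact: measurable_cst.
  apply: (measurableT_comp (@normr_measurable R setT)).
  by apply: measurable_funB => //; exact: measurable_cst.
have := mf measurableT [set true] I; rewrite setTI.
by congr measurable; apply/seteqP; split => w /=.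
Qed.

Lemma L2 d (T : measurableType d) (R : realType) (P : probability T R) (A B C : nat -> set T) :
 (forall n, measurable (A n)) -> (forall n, measurable (B n)) -> (forall n, measurable (C n)) ->
 (\forall n \near \oo, A n `<=` B n `|` C n) ->
 (fun n => P (B n)) @ \oo --> 0%E -> (fun n => P (C n)) @ \oo --> 0%E ->
 (fun n => P (A n)) @ \oo --> 0%E.
Proof.
move=> mA mB mC hn hB hC.
apply: (squeeze_cvge (f := fun=> 0%E) (h := fun n => (P (B n) + P (C n))%E)).
- move: hn; apply: filterS => n hn; rewrite measure_ge0 /=.
  apply: le_trans (measureU2 _ (mB n) (mC n)).
  by apply: le_measure => //; rewrite inE //; apply: measurableU.
- exact: cvg_cst.
- by rewrite -(adde0 0%E); apply: cvgeD.
Qed.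

Theorem theorem1 (d : measure_display) (T : measurableType d) (R : realType)
  (P : probability T R)
  (tu tb s2u s2b sbu : nat -> T -> R)
  (theta0 mu nu_u nu_b nu_bu : R)
  (mtu : forall n, measurable_fun setT (tu n))
  (mtb : forall n, measurable_fun setT (tb n))
  (ms2u : forall n, measurable_fun setT (s2u n))
  (ms2b : forall n, measurable_fun setT (s2b n))
  (msbu : forall n, measurable_fun setT (sbu n)) :
  cvg_in_prob P tb (theta0 + mu) ->
  cvg_in_prob P tu theta0 ->
  cvg_in_prob P (fun n w => n%:R * s2u n w) nu_u ->
  cvg_in_prob P (fun n w => n%:R * s2b n w) nu_b ->
  cvg_in_prob P (fun n w => n%:R * sbu n w) nu_bu ->
  mu != 0 ->
  cvg_in_prob P
    (fun n w => lambda_hat (tu n w) (tb n w) (s2u n w) (s2b n w) (sbu n w)) 0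
  /\
  cvg_in_prob P
    (fun n w => comb_est (tu n w) (tb n w) (s2u n w) (s2b n w) (sbu n w)) theta0.
Proof.
move=> Hb Hu H3 H4 H5 mu0.
have mS (f : nat -> T -> R) : (forall n, measurable_fun setT (f n)) ->
    forall n, measurable_fun setT (fun w => n%:R * f n w).
  by move=> mf n; apply: measurable_funM => //; exact: measurable_cst.
have G : forall (Y : nat -> T -> R) c, (forall n, measurable_fun setT (Y n)) ->
  (forall eps, 0 < eps -> exists2 delta : R, 0 < delta & exists N : nat,
     forall n, (N <= n)%N -> forall w,
     `|tb n w - (theta0 + mu)| < delta -> `|tu n w - theta0| < delta ->
     `|n%:R * s2u n w - nu_u| < 1 -> `|n%:R * s2b n w - nu_b| < 1 ->
     `|n%:R * sbu n w - nu_bu| < 1 -> `|Y n w - c| < eps) ->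
  cvg_in_prob P Y c.
  move=> Y c mY hdet eps heps.
  have [dl dl0 [N hN]] := hdet eps heps.
  pose B1 n := [set w | dl <= `|tb n w - (theta0 + mu)|].
  pose B2 n := [set w | dl <= `|tu n w - theta0|].
  pose B3 n := [set w | 1 <= `|n%:R * s2u n w - nu_u|].
  pose B4 n := [set w | 1 <= `|n%:R * s2b n w - nu_b|].
  pose B5 n := [set w | 1 <= `|n%:R * sbu n w - nu_bu|].
  have m1 n : measurable (B1 n) by apply: set_meas.
  have m2 n : measurable (B2 n) by apply: set_meas.
  have m3 n : measurable (B3 n) by apply: set_meas; apply: mS.
  have m4 n : measurable (B4 n) by apply: set_meas; apply: mS.
  have m5 n : measurable (B5 n) by apply: set_meas; apply: mS.
  have c1 : (fun n => P (B1 n)) @ \oo --> 0%E by apply: Hb.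
  have c2 : (fun n => P (B2 n)) @ \oo --> 0%E by apply: Hu.
  have c3 : (fun n => P (B3 n)) @ \oo --> 0%E by apply: H3; apply: ltr01.
  have c4 : (fun n => P (B4 n)) @ \oo --> 0%E by apply: H4; apply: ltr01.
  have c5 : (fun n => P (B5 n)) @ \oo --> 0%E by apply: H5; apply: ltr01.
  have sub (A : nat -> set T) : \forall n \near \oo, A n `<=` A n by near=> k.
  have m45 n : measurable (B4 n `|` B5 n) by apply: measurableU.
  have m345 n : measurable (B3 n `|` (B4 n `|` B5 n)) by apply: measurableU.
  have m2345 n : measurable (B2 n `|` (B3 n `|` (B4 n `|` B5 n))) by apply: measurableU.
  have c45 := @L2 _ _ _ P _ B4 B5 m45 m4 m5 (sub _) c4 c5.
  have c345 := @L2 _ _ _ P _ B3 _ m345 m3 m45 (sub _) c3 c45.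
  have c2345 := @L2 _ _ _ P _ B2 _ m2345 m2 m345 (sub _) c2 c345.
  apply: (@L2 _ _ _ P _ B1 _ _ m1 m2345 _ c1 c2345).
  - by move=> n; apply: set_meas.
  exists N => // n /= hn w /= hw.
  have [h1|h1] := leP dl `|tb n w - (theta0 + mu)|; first by left.
  right; have [h2|h2] := leP dl `|tu n w - theta0|; first by left.
  right; have [h3|h3] := leP 1 `|n%:R * s2u n w - nu_u|; first by left.
  right; have [h4|h4] := leP 1 `|n%:R * s2b n w - nu_b|; first by left.
  right; have [h5|h5] := leP 1 `|n%:R * sbu n w - nu_bu|; first by [].
  by have := hN n hn w h1 h2 h3 h4 h5; rewrite ltNge hw.
have [mL mC] : (forall n, measurable_fun setT
      (fun w => lambda_hat (tu n w) (tb n w) (s2u n w) (s2b n w) (sbu n w))) /\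
    (forall n, measurable_fun setT
      (fun w => comb_est (tu n w) (tb n w) (s2u n w) (s2b n w) (sbu n w))).
  by split => n; have [] := @lam_meas _ _ _ (tu n) (tb n) (s2u n) (s2b n) (sbu n) (mtu n) (mtb n) (ms2u n) (ms2b n) (msbu n).
split.
- apply: G => // eps heps.
  have [dl dl0 [N hN]] := @det R theta0 mu nu_u nu_b nu_bu eps mu0 heps.
  exists dl => //; exists N => n hn w h1 h2 h3 h4 h5.
  by have [] := hN n hn _ _ _ _ _ h1 h2 h3 h4 h5.
- apply: G => // eps heps.
  have [dl dl0 [N hN]] := @det R theta0 mu nu_u nu_b nu_bu eps mu0 heps.
  exists dl => //; exists N => n hn w h1 h2 h3 h4 h5.
  by have [] := hN n hn _ _ _ _ _ h1 h2 h3 h4 h5.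
Unshelve. all: by end_near.
Qed.
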